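(* Let $k \ge 0$ be an integer. Let $A, B, C, D$ be pairwise disjoint piles of coins, each of size $2^k$, containing exactly two counterfeit coins in total, and suppose it is known that either (one coin of $A$ and one coin of $B$ are counterfeit) or (one coin of $C$ and one coin of $D$ are counterfeit). Then there is an adaptive strategy using at most $k+1$ weighings on a 5-way scale that determines both counterfeit coins.
   Context: Coins look identical; all genuine coins have one common weight, all counterfeit coins have one common weight strictly less than the genuine weight. A weighing places two disjoint sets of coins of equal cardinality on the left and right pans. Let $d$ = (number of counterfeit coins on the left pan) $-$ (number of counterfeit coins on the right pan). A 5-way scale reports MUCH LESS if $d \ge 2$, LESS if $d = 1$, EQUAL if $d = 0$, MORE if $d = -1$, MUCH MORE if $d \le -2$. A strategy chooses each weighing possibly depending on previous outcomes; it determines the counterfeit coins if the sequence of outcomes uniquely identifies them. *)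

(* Defs.v *)
From HB Require Import structures.
From mathcomp Require Import all_boot.
Set Implicit Arguments. Unset Strict Implicit. Unset Printing Implicit Defensive.

Inductive outcome := MuchLess | Less | Equal | More | MuchMore.

Section Weighing.
Variable T : finType.

Definition outcome_of (S L R : {set T}) : outcome :=
  let dl := #|S :&: L| in
  let dr := #|S :&: R| in
  if dr + 2 <= dl then MuchLess
  else if dl == dr + 1 then Less
  else if dl == dr then Equal
  else if dr == dl + 1 then More
  else MuchMore.

Inductive strategy :=
  | Stop
  | Weigh of {set T} & {set T} & (outcome -> strategy).

Fixpoint valid_strategy (t : strategy) : Prop :=
  match t with
  | Stop => True
  | Weigh L R f => [disjoint L & R] /\ #|L| = #|R| /\ forall o, valid_strategy (f o)
  end.

Fixpoint uses_at_most (t : strategy) (n : nat) : Prop :=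
  match t with
  | Stop => True
  | Weigh _ _ f => match n with 0 => False | n'.+1 => forall o, uses_at_most (f o) n' end
  end.

Fixpoint run (t : strategy) (S : {set T}) : seq outcome :=
  match t with
  | Stop => [::]
  | Weigh L R f => let o := outcome_of S L R in o :: run (f o) S
  end.

Definition determines (t : strategy) (adm : {set T} -> Prop) : Prop :=
  forall S1 S2, adm S1 -> adm S2 -> run t S1 = run t S2 -> S1 = S2.

End Weighing.

(* Coins: four disjoint piles A,B,C,D (indices 0,1,2,3), each of size 2^k. *)
Definition coin (k : nat) : finType := ('I_4 * 'I_(2 ^ k))%type.

Definition admissible (k : nat) (S : {set coin k}) : Prop :=
  (exists a b : 'I_(2 ^ k), S = [set (inord 0, a); (inord 1, b)]) \/
  (exists c d : 'I_(2 ^ k), S = [set (inord 2, c); (inord 3, d)]).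

(* Main.v *)
Set Warnings "-notation-overridden".
Require Import Defs.
From mathcomp Require Import all_boot.

Section Proof.
Variable k : nat.
Local Notation C := (coin k).

Lemma v0 : nat_of_ord (inord 0 : 'I_4) = 0. Proof. by rewrite inordK. Qed.
Lemma v1 : nat_of_ord (inord 1 : 'I_4) = 1. Proof. by rewrite inordK. Qed.
Lemma v2 : nat_of_ord (inord 2 : 'I_4) = 2. Proof. by rewrite inordK. Qed.
Lemma v3 : nat_of_ord (inord 3 : 'I_4) = 3. Proof. by rewrite inordK. Qed.

Definition bit (i : nat) (j : nat) := odd (i %/ 2 ^ j).

Definition sw (p : 'I_4) : 'I_4 := inord ((p + 2) %% 4).
Lemma swv (p : 'I_4) : nat_of_ord (sw p) = (p + 2) %% 4.
Proof. by rewrite /sw inordK // ltn_pmod. Qed.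
Definition swc (x : C) : C := (sw x.1, x.2).
Lemma swc_inv : involutive swc.
Proof.
case=> p i; rewrite /swc /=; congr pair; apply: val_inj => /=.
rewrite !swv; case: p => [[|[|[|[|m]]]] Hp] //.
Qed.
Lemma swc_inj : injective swc. Proof. exact: inv_inj swc_inv. Qed.

Lemma card_sw (L R : {set C}) :
  (forall x, (x \in R) = (swc x \in L)) -> #|L| = #|R|.
Proof.
move=> H; rewrite -(card_preimset L swc_inj); apply: eq_card => x; by rewrite !inE H.
Qed.

Lemma disjI (L R : {set C}) : (forall x, x \in L -> x \in R -> False) -> [disjoint L & R].
Proof.
move=> H; rewrite disjoint_subset; apply/subsetP => x Hx; rewrite !inE.
by apply/negP => /(H x Hx).
Qed.

Definition L0 : {set C} := [set x : C | nat_of_ord x.1 == 0].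
Definition R0 : {set C} := [set x : C | nat_of_ord x.1 == 2].
Definition Lj j : {set C} := [set x : C | (nat_of_ord x.1 == 0) && bit x.2 j
   || (nat_of_ord x.1 == 1) && bit x.2 j || (nat_of_ord x.1 == 2) && ~~ bit x.2 j].
Definition Rj j : {set C} := [set x : C | (nat_of_ord x.1 == 0) && ~~ bit x.2 j
   || (nat_of_ord x.1 == 2) && bit x.2 j || (nat_of_ord x.1 == 3) && bit x.2 j].

Fixpoint chain (ws : seq ({set C} * {set C})) : strategy C :=
  match ws with
  | [::] => Stop _
  | w :: ws' => Weigh w.1 w.2 (fun _ => chain ws')
  end.

Lemma run_chain ws S : run (chain ws) S = map (fun w => outcome_of S w.1 w.2) ws.
Proof. by elim: ws => //= w ws ->. Qed.

Lemma uses_chain ws : uses_at_most (chain ws) (size ws).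
Proof. by elim: ws => //= w ws IH. Qed.

Definition ws := (L0, R0) :: mkseq (fun j => (Lj j, Rj j)) k.

Lemma pile_cases (p : 'I_4) : [\/ nat_of_ord p = 0, nat_of_ord p = 1,
   nat_of_ord p = 2 | nat_of_ord p = 3].
Proof. by case: p => [[|[|[|[|m]]]] Hp] /=; [constructor 1|constructor 2|constructor 3|constructor 4|]. Qed.

Lemma valid_ws : valid_strategy (chain ws).
Proof.
rewrite /ws /=; split; [|split; [|move=> _]].
- apply: disjI => x; rewrite !inE => /eqP ->.
  done.
- apply: card_sw => x; rewrite !inE /= swv.
  by case: (pile_cases x.1) => ->.
- rewrite /mkseq; elim: (iota 0 k) => [|j s IH] //=; split; [|split; [|by move=> _]].
  + apply: disjI => x; rewrite !inE.
    by case: (pile_cases x.1) => ->; case: (bit x.2 j).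
  + apply: card_sw => x; rewrite !inE /= swv.
    by case: (pile_cases x.1) => ->; case: (bit x.2 j).
Qed.

Lemma card2I (x y : C) (P : {set C}) : x != y ->
  #|[set x; y] :&: P| = (x \in P) + (y \in P).
Proof.
move=> nxy.
have nyx : y != x by rewrite eq_sym.
case Hx: (x \in P); case Hy: (y \in P).
- rewrite (_ : _ :&: _ = [set x; y]) ?cards2 ?nxy //.
  apply/setP => z; rewrite !inE.
  have [->|nzx] := eqVneq z x; [|have [->|nzy] := eqVneq z y; [|by rewrite ?andbF]];
  by rewrite ?eqxx ?(negbTE nxy) ?(negbTE nyx) ?Hx ?Hy ?orbT ?andbF.
- rewrite (_ : _ :&: _ = [set x]) ?cards1 //.
  apply/setP => z; rewrite !inE.
  have [->|nzx] := eqVneq z x; [|have [->|nzy] := eqVneq z y; [|by rewrite ?andbF]];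
  by rewrite ?eqxx ?(negbTE nxy) ?(negbTE nyx) ?Hx ?Hy ?orbT ?andbF.
- rewrite (_ : _ :&: _ = [set y]) ?cards1 //.
  apply/setP => z; rewrite !inE.
  have [->|nzx] := eqVneq z x; [|have [->|nzy] := eqVneq z y; [|by rewrite ?andbF]];
  by rewrite ?eqxx ?(negbTE nxy) ?(negbTE nyx) ?Hx ?Hy ?orbT ?andbF.
- rewrite (_ : _ :&: _ = set0) ?cards0 //.
  apply/setP => z; rewrite !inE.
  have [->|nzx] := eqVneq z x; [|have [->|nzy] := eqVneq z y; [|by rewrite ?andbF]];
  by rewrite ?eqxx ?(negbTE nxy) ?(negbTE nyx) ?Hx ?Hy ?orbT ?andbF.
Qed.

Definition SAB (a b : 'I_(2^k)) : {set C} := [set (inord 0, a); (inord 1, b)].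
Definition SCD (c d : 'I_(2^k)) : {set C} := [set (inord 2, c); (inord 3, d)].

Lemma neqAB a b : ((inord 0, a) : C) != (inord 1, b).
Proof. by apply/negP => /eqP [] /(congr1 val) /=; rewrite v0 v1. Qed.
Lemma neqCD a b : ((inord 2, a) : C) != (inord 3, b).
Proof. by apply/negP => /eqP [] /(congr1 val) /=; rewrite v2 v3. Qed.

Lemma out0AB a b : outcome_of (SAB a b) L0 R0 = Less.
Proof. by rewrite /outcome_of !card2I ?neqAB // !inE /= v0 v1. Qed.
Lemma out0CD a b : outcome_of (SCD a b) L0 R0 = More.
Proof. by rewrite /outcome_of !card2I ?neqCD // !inE /= v2 v3. Qed.

Definition fAB (u w : bool) :=
  match u, w with true, true => MuchLess | true, false => Less
  | false, true => Equal | false, false => More end.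
Definition fCD (u w : bool) :=
  match u, w with false, false => Less | false, true => Equal
  | true, false => More | true, true => MuchMore end.

Lemma fAB_inj u w u' w' : fAB u w = fAB u' w' -> u = u' /\ w = w'.
Proof. by case: u; case: w; case: u'; case: w'. Qed.
Lemma fCD_inj u w u' w' : fCD u w = fCD u' w' -> u = u' /\ w = w'.
Proof. by case: u; case: w; case: u'; case: w'. Qed.

Lemma outjAB a b j : outcome_of (SAB a b) (Lj j) (Rj j) = fAB (bit a j) (bit b j).
Proof.
by rewrite /outcome_of !card2I ?neqAB // !inE /= v0 v1; case: (bit a j); case: (bit b j).
Qed.
Lemma outjCD a b j : outcome_of (SCD a b) (Lj j) (Rj j) = fCD (bit a j) (bit b j).
Proof.
by rewrite /outcome_of !card2I ?neqCD // !inE /= v2 v3; case: (bit a j); case: (bit b j).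
Qed.

End Proof.

Lemma bits_inj n i i' : i < 2 ^ n -> i' < 2 ^ n ->
  (forall j, j < n -> bit i j = bit i' j) -> i = i'.
Proof.
elim: n i i' => [|n IH] i i' Hi Hi' H.
  by move: Hi Hi'; rewrite expn0 !ltnS !leqn0 => /eqP -> /eqP ->.
have H0 := H 0 isT; rewrite /bit expn0 !divn1 in H0.
rewrite (divn_eq i 2) (divn_eq i' 2) !modn2 H0; congr (_ * 2 + _).
apply: IH.
- by rewrite ltn_divLR // -expnSr.
- by rewrite ltn_divLR // -expnSr.
move=> j Hj; have := H j.+1 Hj; by rewrite /bit -!divnMA -expnS.
Qed.

Lemma map_mkseq_eq (A B : Type) (F G : A -> B) (g : nat -> A) n (b0 : B) :
  map F (mkseq g n) = map G (mkseq g n) -> forall j, j < n -> F (g j) = G (g j).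
Proof.
move=> E j Hj; move: (congr1 (nth b0 ^~ j) E).
by rewrite !(nth_map (g 0)) ?size_mkseq // nth_mkseq.
Qed.

Theorem mainTheorem6 (k : nat) :
  exists t : strategy (coin k),
    valid_strategy t /\ uses_at_most t k.+1 /\ determines t (@admissible k).
Proof.
exists (@chain k (ws k)); split; first exact: (valid_ws k).
split; first by have := @uses_chain k (ws k); rewrite /ws /= size_mkseq.
move=> S1 S2 H1 H2; rewrite !run_chain /ws /= => -[E0 E].
have ME := @map_mkseq_eq _ _ _ _ _ _ Equal E.
have bitsE : forall a a' : 'I_(2 ^ k), (forall j, j < k -> bit a j = bit a' j) -> a = a'.
  by move=> a a' Hb; apply: ord_inj; apply: (@bits_inj k); [exact: ltn_ord|exact: ltn_ord|exact: Hb].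
case: H1 => [[a [b E1]]|[c [d E1]]]; case: H2 => [[a' [b' E2]]|[c' [d' E2]]]; subst.
- have HH j Hj := @fAB_inj _ _ _ _ (etrans (esym (outjAB k a b j)) (etrans (ME j Hj) (outjAB k a' b' j))).
  have ea : a = a' by apply: bitsE => j Hj; case: (HH j Hj).
  have eb : b = b' by apply: bitsE => j Hj; case: (HH j Hj).
  by rewrite ea eb.
- by move: E0; rewrite (out0AB k a b) (out0CD k c' d').
- by move: E0; rewrite (out0AB k a' b') (out0CD k c d).
- have HH j Hj := @fCD_inj _ _ _ _ (etrans (esym (outjCD k c d j)) (etrans (ME j Hj) (outjCD k c' d' j))).
  have ea : c = c' by apply: bitsE => j Hj; case: (HH j Hj).
  have eb : d = d' by apply: bitsE => j Hj; case: (HH j Hj).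
  by rewrite ea eb.
Qed.
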